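(* For every target rate $r>0$, $P_{\rm r}>0$ and $\mathcal C_x\in[0,1)$, \[ \mathcal P_{\rm sr}(P_{\rm r},\mathcal C_x)\ge 1-\frac{e^{-\frac{\Psi_r(\mathcal C_x)}{P_{\rm s}\theta_{\rm sr}}}}{\Gamma(m_{\rm rr})\theta_{\rm rr}^{m_{\rm rr}}}\sum_{m=0}^{m_{\rm sr}-1}\sum_{k=0}^{m}\binom{m}{k}\frac{P_{\rm r}^k\,\Gamma(k+m_{\rm rr})\left(\frac{\Psi_r(\mathcal C_x)}{P_{\rm s}\theta_{\rm sr}}\right)^m}{\Gamma(m+1)\left(\frac{P_{\rm r}\Psi_r(\mathcal C_x)}{P_{\rm s}\theta_{\rm sr}}+\frac1{\theta_{\rm rr}}\right)^{k+m_{\rm rr}}}=:\mathcal P^{\rm LB}_{\rm sr}(P_{\rm r},\mathcal C_x). \]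
   Context: Let $P_{\rm s}>0$, $P_{\rm r}>0$ be the source and relay transmit powers. For links $ij\in\{\mathrm{sr},\mathrm{rr},\mathrm{rd},\mathrm{sd}\}$ let $g_{ij}$ be mutually independent random channel gains, $g_{ij}$ gamma distributed with integer shape parameter $m_{ij}\ge1$ and scale $\theta_{ij}=\pi_{ij}/m_{ij}$, where $\pi_{ij}=\mathbb E[g_{ij}]>0$; i.e. $g_{ij}$ has density $x^{m_{ij}-1}e^{-x/\theta_{ij}}/(\Gamma(m_{ij})\theta_{ij}^{m_{ij}})$ for $x\ge0$. For a circularity coefficient $\mathcal C_x\in[0,1)$ define $R_{\rm sr}(P_{\rm r},\mathcal C_x)=\tfrac12\log_2\frac{(P_{\rm s}g_{\rm sr}+P_{\rm r}g_{\rm rr}+1)^2-(P_{\rm r}g_{\rm rr}\mathcal C_x)^2}{(P_{\rm r}g_{\rm rr}+1)^2-(P_{\rm r}g_{\rm rr}\mathcal C_x)^2}$. For a target rate $r>0$ put $\gamma=2^{2r}-1$ and $\Psi_r(x)=\sqrt{1+\gamma(1-x^2)}-1$. The S–R outage probability is $\mathcal P_{\rm sr}=\mathbb P\{R_{\rm sr}<r\}$. *)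

(* Defs.v *)
From Stdlib Require Import Reals Lra Lia Arith Factorial.
Open Scope R_scope.

Definition is_RInt (f : R -> R) (a b v : R) : Prop :=
  exists pr : Riemann_integrable f a b, RiemannInt pr = v.

Definition is_RInt_0_infty (f : R -> R) (l : R) : Prop :=
  (forall L, 0 <= L -> exists v, is_RInt f 0 L v) /\
  (forall eps, 0 < eps -> exists M, forall L v, M <= L -> is_RInt f 0 L v ->
      Rabs (v - l) < eps).

(* Gamma density with integer shape m >= 1 and scale theta, on x >= 0.
   Gamma(m) = (m-1)! for integer m >= 1. *)
Definition gamma_pdf (m : nat) (theta x : R) : R :=
  x ^ (m - 1) * exp (- x / theta) / (INR (fact (m - 1)) * theta ^ m).

Definition log2 (x : R) : R := ln x / ln 2.

Definition Rsr (Ps Pr Cx gsr grr : R) : R :=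
  / 2 * log2 (((Ps * gsr + Pr * grr + 1) ^ 2 - (Pr * grr * Cx) ^ 2) /
              ((Pr * grr + 1) ^ 2 - (Pr * grr * Cx) ^ 2)).

Definition indic_lt (a b : R) : R := if Rlt_dec a b then 1 else 0.

Definition gam (r : R) : R := Rpower 2 (2 * r) - 1.

Definition Psi (r x : R) : R := sqrt (1 + gam r * (1 - x ^ 2)) - 1.

(* p is the S-R outage probability P{R_sr < r} for independent
   g_sr ~ Gamma(m_sr, theta_sr), g_rr ~ Gamma(m_rr, theta_rr), computed as
   the iterated integral int_0^oo f_rr(y) (int_0^oo 1{R_sr(x,y)<r} f_sr(x) dx) dy. *)
Definition is_outage_sr (Ps Pr Cx r : R) (msr mrr : nat) (thsr thrr p : R)
  : Prop :=
  exists h : R -> R,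
    (forall y, 0 <= y ->
       is_RInt_0_infty
         (fun x => indic_lt (Rsr Ps Pr Cx x y) r * gamma_pdf msr thsr x) (h y)) /\
    is_RInt_0_infty (fun y => gamma_pdf mrr thrr y * h y) p.

Definition P_LB_sr (Ps Pr Cx r : R) (msr mrr : nat) (thsr thrr : R) : R :=
  let a := Psi r Cx / (Ps * thsr) in
  1 - exp (- a) / (INR (fact (mrr - 1)) * thrr ^ mrr) *
      sum_f_R0 (fun m =>
        sum_f_R0 (fun k =>
          C m k * (Pr ^ k * INR (fact (k + mrr - 1)) * a ^ m) /
          (INR (fact m) * (Pr * a + / thrr) ^ (k + mrr))) m) (msr - 1).

(* Main.v *)
Require Import Defs.
From Stdlib Require Import Reals Lra Lia Psatz Classical Factorial.
From Coquelicot Require Import Coquelicot.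
Open Scope R_scope.

Ltac nz := repeat split; try apply INR_fact_neq_0; try (apply not_0_INR; lia); try (apply pow_nonzero); auto; try lra.

Definition Ssum (n : nat) (c t : R) : R :=
  sum_f_R0 (fun j => INR (fact n) / INR (fact j) * t ^ j / c ^ (n + 1 - j)) n.
Definition G (n : nat) (c t : R) : R := - exp (- c * t) * Ssum n c t.

Lemma Ssum_succ n c t : c <> 0 ->
  Ssum (S n) c t = t ^ (S n) / c + INR (S n) / c * Ssum n c t.
Proof.
  intros Hc. unfold Ssum. rewrite tech5.
  rewrite scal_sum.
  replace (S n + 1 - S n)%nat with 1%nat by lia.
  rewrite Rplus_comm. f_equal.
  - rewrite fact_simpl. rewrite mult_INR. field. nz.
  - apply sum_eq. intros j Hj.
    replace (S n + 1 - j)%nat with (S (n + 1 - j)) by lia.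
    rewrite fact_simpl, mult_INR. simpl (c ^ S _).
    assert (c ^ (n + 1 - j) <> 0) by (apply pow_nonzero; auto).
    assert (INR (fact j) <> 0) by apply INR_fact_neq_0.
    field. auto.
Qed.

Lemma G_derive n c t : c <> 0 -> is_derive (G n c) t (t ^ n * exp (- c * t)).
Proof.
  intros Hc. revert t. induction n as [|n IH]; intros t.
  - unfold G, Ssum. simpl sum_f_R0. auto_derive. exact I. simpl. field. auto.
  - apply is_derive_ext with
      (fun t => - t ^ (S n) * exp (- c * t) / c + INR (S n) / c * G n c t).
    { intros u. unfold G. rewrite (Ssum_succ n c u Hc). match goal with |- ?a = ?b => change (@eq R a b) end. field. auto. }
    assert (H1 : is_derive (fun t => - t ^ (S n) * exp (- c * t) / c) t
                (- (INR (S n) * t ^ n) * exp (- c * t) / c + t ^ (S n) * exp (- c * t))).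
    { auto_derive. exact I. simpl. field. auto. }
    assert (H2 := is_derive_scal (G n c) t (INR (S n) / c) _ (IH t)).
    assert (H3 := is_derive_plus _ _ _ _ _ H1 H2).
    replace (t ^ S n * exp (- c * t)) with (- (INR (S n) * t ^ n) * exp (- c * t) / c + t ^ S n * exp (- c * t) + INR (S n) / c * (t ^ n * exp (- c * t))).
    exact H3.
    match goal with |- ?a = ?b => change (@eq R a b) end. rewrite S_INR. field. auto.
Qed.
Lemma sum_first (f : nat -> R) n : (forall j, (0 < j <= n)%nat -> f j = 0) -> sum_f_R0 f n = f O.
Proof.
  induction n; intros H; simpl. reflexivity.
  rewrite IHn. rewrite (H (S n)). ring. lia. intros; apply H; lia.
Qed.

Lemma Ssum0 n c : Ssum n c 0 = INR (fact n) / c ^ (n + 1).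
Proof.
  unfold Ssum. rewrite sum_first. rewrite Nat.sub_0_r. change (INR (fact 0)) with 1. change (0^0) with 1.
  unfold Rdiv; rewrite Rinv_1; ring.
  intros j Hj. rewrite pow_i by lia. unfold Rdiv; ring.
Qed.

Lemma Ssum_nonneg n c t : 0 < c -> 0 <= t -> 0 <= Ssum n c t.
Proof.
  intros Hc Ht. unfold Ssum. apply cond_pos_sum. intros j.
  apply Rmult_le_pos. apply Rmult_le_pos. apply Rmult_le_pos. apply pos_INR.
  left; apply Rinv_0_lt_compat, INR_fact_lt_0. apply pow_le; auto.
  left; apply Rinv_0_lt_compat, pow_lt; auto.
Qed.

Lemma G_le0 n c t : 0 < c -> 0 <= t -> G n c t <= 0.
Proof.
  intros. unfold G. assert (0 <= Ssum n c t) by (apply Ssum_nonneg; auto).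
  assert (0 < exp (- c * t)) by apply exp_pos. nra.
Qed.

Lemma G0 n c : G n c 0 = - (INR (fact n) / c ^ (n + 1)).
Proof. unfold G. rewrite Ssum0. rewrite Rmult_0_r, exp_0. ring. Qed.

Lemma intE n c a b : c <> 0 ->
  is_RInt (fun t => t ^ n * exp (- c * t)) a b (G n c b - G n c a).
Proof.
  intros Hc. apply (is_RInt_derive (G n c)).
  - intros; apply G_derive; auto.
  - intros x _. apply (ex_derive_continuous (K:=R_AbsRing) (V:=R_NormedModule)). auto_derive. exact I.
Qed.
Definition Tl (n : nat) (u : R) : R := exp (- u) * sum_f_R0 (fun j => u ^ j / INR (fact j)) n.
Definition Phi (n : nat) (th t : R) : R := 1 - Tl n (t / th).

Lemma Phi_G n th t : 0 < th ->
  Phi n th t = (G n (/ th) t - G n (/ th) 0) / (INR (fact n) * th ^ (S n)).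
Proof.
  intros Hth. rewrite G0. unfold G, Phi, Tl.
  replace (- / th * t) with (- (t / th)) by (field; lra).
  assert (HK : INR (fact n) * th ^ S n <> 0) by (apply Rmult_integral_contrapositive; split; nz).
  assert (E : Ssum n (/ th) t = (INR (fact n) * th ^ S n) *
      sum_f_R0 (fun j => (t / th) ^ j / INR (fact j)) n).
  { unfold Ssum. rewrite scal_sum. apply sum_eq. intros j Hj.
    unfold Rdiv. rewrite Rpow_mult_distr, !pow_inv.
    replace (S n) with ((n + 1 - j) + j)%nat by lia. rewrite pow_add.

    assert (th ^ (n + 1 - j) <> 0) by nz. assert (th ^ j <> 0) by nz.
    assert (INR (fact j) <> 0) by nz. field. auto. }
  rewrite E. rewrite pow_inv. replace (n+1)%nat with (S n) by lia.
  field. nz.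
Qed.

Lemma pdf_int n th t : 0 < th ->
  is_RInt (gamma_pdf (S n) th) 0 t (Phi n th t).
Proof.
  intros Hth. rewrite Phi_G by auto.
  assert (HK : INR (fact n) * th ^ S n <> 0) by (apply Rmult_integral_contrapositive; split; nz).
  assert (H := is_RInt_scal _ 0 t (/ (INR (fact n) * th ^ S n)) _ (intE n (/ th) 0 t (Rinv_neq_0_compat th ltac:(lra)))).
  eapply is_RInt_ext. 2: {
    replace ((G n (/ th) t - G n (/ th) 0) / (INR (fact n) * th ^ S n))
      with (scal (/ (INR (fact n) * th ^ S n)) (G n (/ th) t - G n (/ th) 0)).
    exact H. unfold scal; simpl; unfold mult; simpl. unfold Rdiv. ring. }
  intros x _. unfold gamma_pdf, scal; simpl; unfold mult; simpl.
  rewrite Nat.sub_0_r. replace (- x / th) with (- / th * x) by (field; lra).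
  field. nz.
Qed.

Lemma Tl_nonneg n u : 0 <= u -> 0 <= Tl n u.
Proof.
  intros Hu. unfold Tl. apply Rmult_le_pos. left; apply exp_pos.
  apply cond_pos_sum. intros j. apply Rmult_le_pos. apply pow_le; auto.
  left; apply Rinv_0_lt_compat, INR_fact_lt_0.
Qed.

Lemma Phi_le1 n th t : 0 < th -> 0 <= t -> Phi n th t <= 1.
Proof.
  intros. unfold Phi. assert (0 <= Tl n (t / th)). apply Tl_nonneg.
  unfold Rdiv; apply Rmult_le_pos; auto. left; apply Rinv_0_lt_compat; auto. lra.
Qed.

Lemma Phi_mono n th t1 t2 : 0 < th -> 0 <= t1 -> t1 <= t2 -> Phi n th t1 <= Phi n th t2.
Proof.
  intros Hth H1 H12. rewrite !Phi_G by auto.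
  assert (HK : 0 < INR (fact n) * th ^ S n) by (apply Rmult_lt_0_compat; [apply INR_fact_lt_0| apply pow_lt; auto]).
  assert (0 <= G n (/ th) t2 - G n (/ th) t1).
  { apply (is_RInt_ge_0 _ t1 t2 _ H12 (intE n (/ th) t1 t2 (Rinv_neq_0_compat th ltac:(lra)))).
    intros x Hx. apply Rmult_le_pos. 2: left; apply exp_pos. apply pow_le; lra. }
  unfold Rdiv. apply Rmult_le_compat_r. left; apply Rinv_0_lt_compat; auto. lra.
Qed.

Lemma Phi_nonneg n th t : 0 < th -> 0 <= t -> 0 <= Phi n th t.
Proof.
  intros. assert (H1 := Phi_mono n th 0 t H (Rle_refl 0) H0).
  rewrite (Phi_G n th 0) in H1 by auto. replace (G n (/ th) 0 - G n (/ th) 0) with 0 in H1 by ring. unfold Rdiv in H1. rewrite Rmult_0_l in H1. exact H1.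
Qed.
Lemma exp_pow k v : exp (INR k * v) = exp v ^ k.
Proof.
  induction k. simpl. rewrite Rmult_0_l, exp_0. reflexivity.
  rewrite S_INR. replace ((INR k + 1) * v) with (v + INR k * v) by ring.
  rewrite exp_plus, IHk. simpl. ring.
Qed.

Lemma exp_ge_pow n u : 0 <= u -> (u / INR (S n)) ^ (S n) <= exp u.
Proof.
  intros Hu. assert (HN : 0 < INR (S n)) by (apply lt_0_INR; lia).
  replace u with (INR (S n) * (u / INR (S n))) at 2 by (field; lra).
  rewrite exp_pow. apply pow_incr. split.
  unfold Rdiv; apply Rmult_le_pos; auto. left; apply Rinv_0_lt_compat; auto.
  assert (H := exp_ineq1_le (u / INR (S n))). lra.
Qed.

Lemma Tl_small n eps : 0 < eps -> exists u, 0 <= u /\ Tl n u < eps.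
Proof.
  intros He. set (N := INR (S n)).
  assert (HN : 1 <= N) by (unfold N; rewrite S_INR; assert (0 <= INR n) by apply pos_INR; lra).
  set (A := N ^ (S (S n))).
  assert (HA : 0 < A) by (unfold A; apply pow_lt; lra).
  set (u := Rmax 1 (2 * A / eps)).
  assert (Hu1 : 1 <= u) by apply Rmax_l.
  assert (Hu2 : 2 * A / eps <= u) by apply Rmax_r.
  exists u. split. lra.
  assert (Hs : sum_f_R0 (fun j => u ^ j / INR (fact j)) n <= N * u ^ n).
  { apply Rle_trans with (sum_f_R0 (fun _ => u ^ n) n).
    apply sum_Rle. intros j Hj.
    apply Rle_trans with (u ^ j). unfold Rdiv.
    rewrite <- (Rmult_1_r (u ^ j)) at 2. apply Rmult_le_compat_l. apply pow_le; lra.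
    assert (1 <= INR (fact j)) by (apply (le_INR 1); apply lt_O_fact).
    rewrite <- Rinv_1. apply Rinv_le_contravar; lra.
    apply Rle_pow; [lra|lia].
    rewrite sum_cte. unfold N. lra. }
  assert (He2 := exp_ge_pow n u ltac:(lra)). fold N in He2.
  assert (Hp : 0 < (u / N) ^ S n) by (apply pow_lt; unfold Rdiv; apply Rmult_lt_0_compat; [lra| apply Rinv_0_lt_compat; lra]).
  unfold Tl. rewrite exp_Ropp.
  apply Rle_lt_trans with (/ (u / N) ^ S n * (N * u ^ n)).
  { apply Rmult_le_compat. left; apply Rinv_0_lt_compat, exp_pos.
    apply cond_pos_sum; intros j; apply Rmult_le_pos; [apply pow_le; lra| left; apply Rinv_0_lt_compat, INR_fact_lt_0].
    apply Rinv_le_contravar; auto. exact Hs. }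
  replace (/ (u / N) ^ S n * (N * u ^ n)) with (A / u).
  2: { unfold A. unfold Rdiv. rewrite Rpow_mult_distr, pow_inv. simpl. field.
       repeat split; try lra; apply pow_nonzero; lra. }
  apply Rle_lt_trans with (eps / 2). 2: lra.
  unfold Rdiv. apply Rmult_le_reg_r with (u * 2). lra.
  replace (A * / u * (u * 2)) with (2 * A) by (field; lra).
  replace (eps * / 2 * (u * 2)) with (eps * u) by field.
  apply Rmult_le_reg_l with (/ eps). apply Rinv_0_lt_compat; auto.
  replace (/ eps * (eps * u)) with u by (field; lra). lra.
Qed.
Definition Kq (Pr Cx r y : R) : R :=
  (gam r + 1) * ((Pr * y + 1) ^ 2 - (Pr * y * Cx) ^ 2) + (Pr * y * Cx) ^ 2.
Definition xs (Ps Pr Cx r y : R) : R := (sqrt (Kq Pr Cx r y) - Pr * y - 1) / Ps.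

Lemma ln2_pos : 0 < ln 2.
Proof. rewrite <- ln_1. apply ln_increasing; lra. Qed.

Lemma gam_eq r : gam r + 1 = exp (2 * r * ln 2).
Proof. unfold gam, Rpower. ring. Qed.

Lemma gam_pos r : 0 < r -> 0 < gam r.
Proof.
  intros Hr. assert (H := gam_eq r). assert (1 < exp (2 * r * ln 2)).
  { rewrite <- exp_0. apply exp_increasing. assert (H2 := ln2_pos). nra. }
  lra.
Qed.

Lemma iff_div_lt z l r : 0 < l -> (/ 2 * (z / l) < r <-> z < 2 * r * l).
Proof.
  intros Hl. replace (/ 2 * (z / l)) with (z / (2 * l)) by (field; lra).
  split; intro H.
  - apply Rmult_lt_compat_r with (r := 2 * l) in H; [|lra].
    replace (z / (2 * l) * (2 * l)) with z in H by (field; lra). lra.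
  - apply Rmult_lt_reg_r with (2 * l). lra.
    replace (z / (2 * l) * (2 * l)) with z by (field; lra). lra.
Qed.

Lemma ln_lt_iff q s : 0 < q -> (ln q < s <-> q < exp s).
Proof.
  intros Hq. split; intro H.
  - rewrite <- (exp_ln q Hq). apply exp_increasing; auto.
  - rewrite <- (ln_exp s). apply ln_increasing; auto.
Qed.

Lemma sqrt_lt_iff u K : 0 <= u -> 0 <= K -> (u ^ 2 < K <-> u < sqrt K).
Proof.
  intros Hu HK. split; intro H.
  - rewrite <- (sqrt_pow2 u Hu). apply sqrt_lt_1; auto. apply pow_le; auto.
  - assert (Hs := sqrt_sqrt K HK). assert (0 <= sqrt K) by apply sqrt_pos. nra.
Qed.

Section Chan.
Variables (Ps Pr Cx r : R).
Hypotheses (HPs : 0 < Ps) (HPr : 0 < Pr) (Hr : 0 < r) (HC0 : 0 <= Cx) (HC1 : Cx < 1).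

Lemma D_pos y : 0 <= y -> 0 < (Pr * y + 1) ^ 2 - (Pr * y * Cx) ^ 2.
Proof.
  intros Hy. assert (0 <= Pr * y) by nra. assert (0 <= Pr * y * Cx) by nra.
  assert (Pr * y * Cx <= Pr * y) by nra. nra.
Qed.

Lemma Kq_pos y : 0 <= y -> 0 < Kq Pr Cx r y.
Proof.
  intros Hy. unfold Kq. assert (H := D_pos y Hy). assert (H2 := gam_pos r Hr).
  assert (0 <= (Pr * y * Cx) ^ 2) by apply pow2_ge_0. nra.
Qed.

Lemma Rsr_lt_iff x y : 0 <= x -> 0 <= y -> (Rsr Ps Pr Cx x y < r <-> x < xs Ps Pr Cx r y).
Proof.
  intros Hx Hy. assert (HD := D_pos y Hy). assert (HK := Kq_pos y Hy).
  set (D := (Pr * y + 1) ^ 2 - (Pr * y * Cx) ^ 2) in *.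
  set (Nn := (Ps * x + Pr * y + 1) ^ 2 - (Pr * y * Cx) ^ 2).
  assert (HN : D <= Nn).
  { unfold D, Nn. assert (0 <= Ps * x) by nra. assert (0 <= Pr * y) by nra. nra. }
  unfold Rsr, log2. fold D. fold Nn.
  rewrite (iff_div_lt _ _ _ ln2_pos).
  assert (Hq : 0 < Nn / D) by (unfold Rdiv; apply Rmult_lt_0_compat; [lra| apply Rinv_0_lt_compat; lra]).
  rewrite (ln_lt_iff _ _ Hq). rewrite <- gam_eq.
  assert (E1 : Nn / D < gam r + 1 <-> (Ps * x + Pr * y + 1) ^ 2 < Kq Pr Cx r y).
  { unfold Kq. fold D. split; intro H.
    - apply Rmult_lt_compat_r with (r := D) in H; auto.
      replace (Nn / D * D) with Nn in H by (field; lra). unfold Nn in H. lra.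
    - apply Rmult_lt_reg_r with D; auto.
      replace (Nn / D * D) with Nn by (field; lra). unfold Nn. lra. }
  rewrite E1.
  assert (Hu : 0 <= Ps * x + Pr * y + 1) by nra.
  rewrite (sqrt_lt_iff _ _ Hu (Rlt_le _ _ HK)).
  unfold xs. split; intro H1.
  - apply Rmult_lt_reg_r with Ps; auto. replace ((sqrt (Kq Pr Cx r y) - Pr * y - 1) / Ps * Ps) with (sqrt (Kq Pr Cx r y) - Pr * y - 1) by (field; lra). lra.
  - apply Rmult_lt_compat_r with (r := Ps) in H1; auto.
    replace ((sqrt (Kq Pr Cx r y) - Pr * y - 1) / Ps * Ps) with (sqrt (Kq Pr Cx r y) - Pr * y - 1) in H1 by (field; lra). lra.
Qed.

Lemma Psi_nonneg : 0 <= Psi r Cx.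
Proof.
  unfold Psi. assert (H := gam_pos r Hr). assert (0 <= 1 - Cx ^ 2) by nra.
  assert (1 <= 1 + gam r * (1 - Cx ^ 2)) by nra.
  rewrite <- sqrt_1 at 1. assert (sqrt 1 <= sqrt (1 + gam r * (1 - Cx ^ 2))) by (apply sqrt_le_1; lra).
  rewrite sqrt_1 in *. lra.
Qed.

Lemma lo_le_xs y : 0 <= y -> Psi r Cx * (1 + Pr * y) / Ps <= xs Ps Pr Cx r y.
Proof.
  intros Hy. unfold xs. apply Rmult_le_compat_r. left; apply Rinv_0_lt_compat; auto.
  unfold Psi. assert (H := gam_pos r Hr). assert (0 <= 1 - Cx ^ 2) by nra.
  set (s := 1 + gam r * (1 - Cx ^ 2)).
  assert (Hs : 0 <= s) by (unfold s; nra).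
  assert (0 <= Pr * y) by nra.
  assert (E : sqrt s * (1 + Pr * y) = sqrt ((1 + Pr * y) ^ 2 * s)).
  { rewrite sqrt_mult. rewrite sqrt_pow2. ring. lra. apply pow2_ge_0. auto. }
  assert (sqrt ((1 + Pr * y) ^ 2 * s) <= sqrt (Kq Pr Cx r y)).
  { apply sqrt_le_1. apply Rmult_le_pos; [apply pow2_ge_0| auto]. left; apply Kq_pos; auto.
    unfold Kq, s. assert (0 <= Cx ^ 2) by apply pow2_ge_0.
    assert (0 <= gam r * Cx ^ 2 * (1 + 2 * (Pr * y))) by (apply Rmult_le_pos; nra).
    nra. }
  nra.
Qed.

End Chan.
Lemma toDefs f a b v : is_RInt f a b v -> Defs.is_RInt f a b v.
Proof.
  intros H. exists (ex_RInt_Reals_0 f a b (ex_intro _ v H)).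
  rewrite <- RInt_Reals. apply is_RInt_unique; auto.
Qed.

Lemma Defs_uniq f a b v w : Defs.is_RInt f a b v -> is_RInt f a b w -> v = w.
Proof.
  intros [pr Hpr] H. rewrite <- Hpr, <- RInt_Reals. apply is_RInt_unique; auto.
Qed.

Section Inner.
Variables (Ps Pr Cx r : R).
Hypotheses (HPs : 0 < Ps) (HPr : 0 < Pr) (Hr : 0 < r) (HC0 : 0 <= Cx) (HC1 : Cx < 1).
Variables (ns : nat) (ths : R).
Hypothesis (Hths : 0 < ths).

Lemma xs_nonneg y : 0 <= y -> 0 <= xs Ps Pr Cx r y.
Proof.
  intros Hy. eapply Rle_trans. 2: apply lo_le_xs; auto.
  assert (H := Psi_nonneg Cx r Hr HC0 HC1).
  unfold Rdiv. apply Rmult_le_pos. apply Rmult_le_pos; nra. left; apply Rinv_0_lt_compat; auto.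
Qed.

Lemma inner_val y L : 0 <= y -> 0 <= L ->
  is_RInt (fun x => indic_lt (Rsr Ps Pr Cx x y) r * gamma_pdf (S ns) ths x) 0 L
    (Phi ns ths (Rmin L (xs Ps Pr Cx r y))).
Proof.
  intros Hy HL. assert (Hx := xs_nonneg y Hy).
  destruct (Rle_lt_dec L (xs Ps Pr Cx r y)) as [H|H].
  - rewrite Rmin_left by auto.
    apply is_RInt_ext with (gamma_pdf (S ns) ths). 2: apply pdf_int; auto.
    intros x Hx2. rewrite Rmin_left in Hx2 by auto. rewrite Rmax_right in Hx2 by auto.
    unfold indic_lt. destruct (Rlt_dec (Rsr Ps Pr Cx x y) r) as [_|Hn]. rewrite Rmult_1_l; reflexivity.
    exfalso. apply Hn. apply Rsr_lt_iff; auto; lra.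
  - rewrite Rmin_right by lra.
    replace (Phi ns ths (xs Ps Pr Cx r y)) with
      (plus (Phi ns ths (xs Ps Pr Cx r y)) (scal (L - xs Ps Pr Cx r y) (0:R))).
    2: { unfold scal; simpl; unfold mult, plus; simpl. ring. }
    apply (is_RInt_Chasles (V:=R_NormedModule) _ 0 (xs Ps Pr Cx r y) L).
    + apply is_RInt_ext with (gamma_pdf (S ns) ths). 2: apply pdf_int; auto.
      intros x Hx2. rewrite Rmin_left in Hx2 by auto. rewrite Rmax_right in Hx2 by auto.
      unfold indic_lt. destruct (Rlt_dec (Rsr Ps Pr Cx x y) r) as [_|Hn]. rewrite Rmult_1_l; reflexivity.
      exfalso. apply Hn. apply Rsr_lt_iff; auto; lra.
    + apply is_RInt_ext with (fun _ => 0). 2: apply (is_RInt_const (V:=R_NormedModule)).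
      intros x Hx2. rewrite Rmin_left in Hx2 by lra. rewrite Rmax_right in Hx2 by lra.
      unfold indic_lt. destruct (Rlt_dec (Rsr Ps Pr Cx x y) r) as [Hl|_]. 2: (rewrite Rmult_0_l; reflexivity).
      exfalso. apply Rsr_lt_iff in Hl; auto; lra.
Qed.

Lemma inner_infty y : 0 <= y ->
  is_RInt_0_infty (fun x => indic_lt (Rsr Ps Pr Cx x y) r * gamma_pdf (S ns) ths x)
    (Phi ns ths (xs Ps Pr Cx r y)).
Proof.
  intros Hy. split.
  - intros L HL. eexists. apply toDefs. apply inner_val; auto.
  - intros eps He. exists (xs Ps Pr Cx r y). intros L v HL Hv.
    assert (HL0 : 0 <= L) by (assert (H := xs_nonneg y Hy); lra).
    rewrite (Defs_uniq _ _ _ _ _ Hv (inner_val y L Hy HL0)).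
    rewrite Rmin_right by auto. rewrite Rminus_diag_eq, Rabs_R0; auto.
Qed.

End Inner.
Ltac Rg := match goal with |- ?a = ?b => change (@eq R a b) end.

Lemma Phi_cont n th t : 0 < th -> continuous (Phi n th) t.
Proof.
  intros Hth.
  apply continuous_ext with (fun t => (G n (/ th) t - G n (/ th) 0) / (INR (fact n) * th ^ (S n))).
  { intros; symmetry; apply Phi_G; auto. }
  apply (ex_derive_continuous (K:=R_AbsRing) (V:=R_NormedModule)).
  auto_derive. eexists. apply G_derive. apply Rinv_neq_0_compat; lra.
Qed.

Lemma pdf_cont n th t : 0 < th -> continuous (gamma_pdf n th) t.
Proof.
  intros Hth. apply (ex_derive_continuous (K:=R_AbsRing) (V:=R_NormedModule)).
  unfold gamma_pdf. auto_derive. exact I.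
Qed.

Lemma pdf_nonneg n th y : 0 < th -> 0 <= y -> 0 <= gamma_pdf n th y.
Proof.
  intros Hth Hy. unfold gamma_pdf. unfold Rdiv. apply Rmult_le_pos.
  apply Rmult_le_pos. apply pow_le; auto. left; apply exp_pos.
  left; apply Rinv_0_lt_compat. apply Rmult_lt_0_compat. apply INR_fact_lt_0. apply pow_lt; auto.
Qed.

Lemma is_RInt_sum (F : nat -> R -> R) (v : nat -> R) a b n :
  (forall i, (i <= n)%nat -> is_RInt (F i) a b (v i)) ->
  is_RInt (fun y => sum_f_R0 (fun i => F i y) n) a b (sum_f_R0 v n).
Proof.
  induction n; intros H; simpl.
  - apply H; lia.
  - exact (is_RInt_plus (V:=R_NormedModule) _ _ a b _ _ (IHn (fun i Hi => H i ltac:(lia))) (H (S n) ltac:(lia))).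
Qed.

Definition hfun Ps Pr Cx r ns ths y := Phi ns ths (xs Ps Pr Cx r y).
Definition gfun Ps Pr Cx r ns ths nr thr y :=
  gamma_pdf (S nr) thr y * hfun Ps Pr Cx r ns ths y.

Section Outer.
Variables (Ps Pr Cx r : R).
Hypotheses (HPs : 0 < Ps) (HPr : 0 < Pr) (Hr : 0 < r) (HC0 : 0 <= Cx) (HC1 : Cx < 1).
Variables (ns nr : nat) (ths thr : R).
Hypotheses (Hths : 0 < ths) (Hthr : 0 < thr).

Let g := gfun Ps Pr Cx r ns ths nr thr.

Lemma g_cont z : 0 <= z -> continuous g z.
Proof.
  intros Hz. unfold g, gfun, hfun.
  apply (continuous_mult (K:=R_AbsRing)). apply pdf_cont; auto.
  apply (continuous_comp (U:=R_UniformSpace) (V:=R_UniformSpace) (W:=R_UniformSpace) (xs Ps Pr Cx r) (Phi ns ths)).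
  2: apply Phi_cont; auto.
  apply (ex_derive_continuous (K:=R_AbsRing) (V:=R_NormedModule)).
  unfold xs, Kq. auto_derive. assert (H := Kq_pos Pr Cx r HPr Hr HC0 HC1 z Hz).
  unfold Kq in H. simpl in H. exact H.
Qed.

Lemma g_ex a b : 0 <= a -> a <= b -> ex_RInt g a b.
Proof.
  intros Ha Hab. apply (ex_RInt_continuous (V:=R_CompleteNormedModule)).
  intros z Hz. rewrite Rmin_left in Hz by auto. apply g_cont; lra.
Qed.

Lemma h_bounds y : 0 <= y -> 0 <= hfun Ps Pr Cx r ns ths y <= 1.
Proof.
  intros Hy. assert (H := xs_nonneg Ps Pr Cx r HPs HPr Hr HC0 HC1 y Hy).
  unfold hfun. split. apply Phi_nonneg; auto. apply Phi_le1; auto.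
Qed.

Lemma g_nonneg y : 0 <= y -> 0 <= g y.
Proof.
  intros Hy. unfold g, gfun. apply Rmult_le_pos. apply pdf_nonneg; auto. apply h_bounds; auto.
Qed.

Definition I L := RInt g 0 L.

Lemma I_mono L1 L2 : 0 <= L1 -> L1 <= L2 -> I L1 <= I L2.
Proof.
  intros H1 H2. unfold I.
  rewrite <- (RInt_Chasles (V:=R_CompleteNormedModule) g 0 L1 L2); [| apply g_ex; lra | apply g_ex; lra].
  assert (0 <= RInt g L1 L2). { apply RInt_ge_0; auto. apply g_ex; lra. intros; apply g_nonneg; lra. }
  change (RInt g 0 L1 <= RInt g 0 L1 + RInt g L1 L2). lra.
Qed.

Lemma I_le1 L : 0 <= L -> I L <= 1.
Proof.
  intros HL. unfold I.
  assert (H := is_RInt_le g (gamma_pdf (S nr) thr) 0 L _ _ HL (RInt_correct _ _ _ (g_ex 0 L ltac:(lra) HL)) (pdf_int nr thr L Hthr)).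
  assert (Phi nr thr L <= 1) by (apply Phi_le1; auto).
  assert (RInt g 0 L <= Phi nr thr L). apply H. intros x Hx. unfold g, gfun.
  assert (Hb := h_bounds x ltac:(lra)). assert (Hp := pdf_nonneg (S nr) thr x Hthr ltac:(lra)). nra.
  lra.
Qed.

End Outer.
Section Lower.
Variables (Ps Pr Cx r : R).
Hypotheses (HPs : 0 < Ps) (HPr : 0 < Pr) (Hr : 0 < r) (HC0 : 0 <= Cx) (HC1 : Cx < 1).
Variables (ns nr : nat) (ths thr : R).
Hypotheses (Hths : 0 < ths) (Hthr : 0 < thr).

Let a := Psi r Cx / (Ps * ths).
Let c := Pr * a + / thr.
Let K := INR (fact nr) * thr ^ (S nr).
Let term m k := exp (- a) / K * (Binomial.C m k * (Pr ^ k * a ^ m) / INR (fact m)).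
Let SS y := sum_f_R0 (fun m => sum_f_R0 (fun k => term m k * (y ^ (k + nr) * exp (- c * y))) m) ns.

Lemma a_nonneg : 0 <= a.
Proof.
  unfold a. assert (H := Psi_nonneg Cx r Hr HC0 HC1). unfold Rdiv. apply Rmult_le_pos; auto.
  left; apply Rinv_0_lt_compat; nra.
Qed.

Lemma c_pos : 0 < c.
Proof. unfold c. assert (H := a_nonneg). assert (0 < / thr) by (apply Rinv_0_lt_compat; auto). nra. Qed.

Lemma K_pos : 0 < K.
Proof. unfold K. apply Rmult_lt_0_compat. apply INR_fact_lt_0. apply pow_lt; auto. Qed.

Lemma ident y : 0 <= y ->
  gamma_pdf (S nr) thr y * Tl ns (a * (1 + Pr * y)) = SS y.
Proof.
  intros Hy. assert (HK := K_pos).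
  assert (Hin : forall m, sum_f_R0 (fun k => term m k * (y ^ (k + nr) * exp (- c * y))) m =
     (exp (- a) / K * a ^ m / INR (fact m) * y ^ nr * exp (- c * y)) * (Pr * y + 1) ^ m).
  { intros m. rewrite binomial. rewrite scal_sum. apply sum_eq. intros k Hk.
    rewrite pow1, pow_add, Rpow_mult_distr. unfold term. field. split; [lra|nz]. }
  unfold SS. rewrite (sum_eq _ _ _ (fun m _ => Hin m)).
  unfold gamma_pdf, Tl. rewrite Nat.sub_succ, Nat.sub_0_r. fold K.
  assert (He : exp (- a) * exp (- c * y) = exp (- (a * (1 + Pr * y))) * exp (- y / thr)).
  { rewrite <- !exp_plus. f_equal. unfold c. field. lra. }
  assert (Hu : exp (- (a * (1 + Pr * y))) = exp (- a) * exp (- c * y) / exp (- y / thr)).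
  { rewrite He. field. apply Rgt_not_eq, exp_pos. }
  rewrite Hu.
  replace (y ^ nr * exp (- y / thr) / K * (exp (- a) * exp (- c * y) / exp (- y / thr) *
     sum_f_R0 (fun j => (a * (1 + Pr * y)) ^ j / INR (fact j)) ns))
   with ((y ^ nr * exp (- a) * exp (- c * y) / K) * sum_f_R0 (fun j => (a * (1 + Pr * y)) ^ j / INR (fact j)) ns).
  2: { field. split. apply Rgt_not_eq, exp_pos. lra. }
  rewrite scal_sum. apply sum_eq. intros m Hm. rewrite Rpow_mult_distr.
  replace (1 + Pr * y) with (Pr * y + 1) by ring. field. split; [lra|nz].
Qed.

Lemma SS_int L :
  is_RInt SS 0 L (sum_f_R0 (fun m => sum_f_R0 (fun k =>
      term m k * (G (k + nr) c L - G (k + nr) c 0)) m) ns).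
Proof.
  apply is_RInt_sum. intros m _. apply is_RInt_sum. intros k _.
  apply (is_RInt_scal (V:=R_NormedModule) _ 0 L (term m k) _ (intE (k + nr) c 0 L ltac:(apply Rgt_not_eq, c_pos))).
Qed.


Lemma LB_eq : 1 - P_LB_sr Ps Pr Cx r (S ns) (S nr) ths thr =
  sum_f_R0 (fun m => sum_f_R0 (fun k => term m k * (INR (fact (k + nr)) / c ^ (k + nr + 1))) m) ns.
Proof.
  unfold P_LB_sr. cbv zeta. fold a. rewrite !Nat.sub_succ, !Nat.sub_0_r. fold c. fold K.
  match goal with |- 1 - (1 - ?X * ?Y) = _ => replace (1 - (1 - X * Y)) with (X * Y) by ring end.
  rewrite scal_sum. apply sum_eq. intros m Hm. rewrite Rmult_comm, scal_sum. apply sum_eq. intros k Hk.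
  replace (k + S nr - 1)%nat with (k + nr)%nat by lia.
  replace (k + S nr)%nat with (k + nr + 1)%nat by lia.
  unfold term. assert (HK := K_pos). assert (Hc := c_pos).
  field. repeat split; try lra; nz.
Qed.

Lemma term_nonneg m k : (k <= m)%nat -> 0 <= term m k.
Proof.
  intros Hk. unfold term. assert (HK := K_pos). assert (Ha := a_nonneg).
  apply Rmult_le_pos. unfold Rdiv. apply Rmult_le_pos. left; apply exp_pos. left; apply Rinv_0_lt_compat; auto.
  unfold Rdiv. apply Rmult_le_pos. apply Rmult_le_pos.
  unfold Binomial.C. unfold Rdiv. apply Rmult_le_pos. apply pos_INR. left; apply Rinv_0_lt_compat.
  apply Rmult_lt_0_compat; apply INR_fact_lt_0.
  apply Rmult_le_pos; apply pow_le; lra.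
  left; apply Rinv_0_lt_compat, INR_fact_lt_0.
Qed.

Lemma SS_val_le L : 0 <= L ->
  sum_f_R0 (fun m => sum_f_R0 (fun k => term m k * (G (k + nr) c L - G (k + nr) c 0)) m) ns
  <= 1 - P_LB_sr Ps Pr Cx r (S ns) (S nr) ths thr.
Proof.
  intros HL. rewrite LB_eq. apply sum_Rle. intros m Hm. apply sum_Rle. intros k Hk.
  apply Rmult_le_compat_l. apply term_nonneg; auto.
  rewrite G0. assert (H := G_le0 (k + nr) c L c_pos HL). lra.
Qed.

Lemma g_ge y : 0 <= y -> gamma_pdf (S nr) thr y - SS y <= gfun Ps Pr Cx r ns ths nr thr y.
Proof.
  intros Hy. rewrite <- ident by auto. unfold gfun, hfun.
  assert (Hp := pdf_nonneg (S nr) thr y Hthr Hy).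
  assert (Hl := lo_le_xs Ps Pr Cx r HPs HPr Hr HC0 HC1 y Hy).
  assert (Hl0 : 0 <= Psi r Cx * (1 + Pr * y) / Ps).
  { assert (H := Psi_nonneg Cx r Hr HC0 HC1). unfold Rdiv. apply Rmult_le_pos. apply Rmult_le_pos; nra.
    left; apply Rinv_0_lt_compat; auto. }
  assert (Hm := Phi_mono ns ths _ _ Hths Hl0 Hl).
  assert (E : Phi ns ths (Psi r Cx * (1 + Pr * y) / Ps) = 1 - Tl ns (a * (1 + Pr * y))).
  { unfold Phi. f_equal. f_equal. unfold a. field. lra. }
  rewrite E in Hm. nra.
Qed.

Lemma I_ge L : 0 <= L -> Phi nr thr L - (1 - P_LB_sr Ps Pr Cx r (S ns) (S nr) ths thr)
   <= I Ps Pr Cx r ns nr ths thr L.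
Proof.
  intros HL. unfold I.
  assert (H1 := is_RInt_minus (V:=R_NormedModule) _ _ 0 L _ _ (pdf_int nr thr L Hthr) (SS_int L)).
  assert (Hex : ex_RInt (gfun Ps Pr Cx r ns ths nr thr) 0 L) by (eapply g_ex; eauto; lra).
  assert (H2 := RInt_correct _ _ _ Hex).
  assert (H3 := is_RInt_le _ _ 0 L _ _ HL H1 H2).
  assert (H4 := SS_val_le L HL).
  eapply Rle_trans. 2: apply H3.
  - change (minus ?x ?y) with (x - y). lra.
  - intros x Hx. change (minus ?x ?y) with (x - y). apply g_ge. lra.
Qed.

End Lower.
Theorem lemma3 (Ps Pr : R) (msr mrr : nat) (pisr pirr : R) (r Cx : R) :
  0 < Ps -> 0 < Pr -> (1 <= msr)%nat -> (1 <= mrr)%nat ->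
  0 < pisr -> 0 < pirr -> 0 < r -> 0 <= Cx < 1 ->
  exists p,
    is_outage_sr Ps Pr Cx r msr mrr (pisr / INR msr) (pirr / INR mrr) p /\
    P_LB_sr Ps Pr Cx r msr mrr (pisr / INR msr) (pirr / INR mrr) <= p.
Proof.
  intros HPs HPr Hms Hmr Hps Hpr Hr [HC0 HC1].
  destruct msr as [|ns]; [lia|]. destruct mrr as [|nr]; [lia|].
  set (ths := pisr / INR (S ns)). set (thr := pirr / INR (S nr)).
  assert (Hths : 0 < ths) by (unfold ths; apply Rdiv_lt_0_compat; auto; apply lt_0_INR; lia).
  assert (Hthr : 0 < thr) by (unfold thr; apply Rdiv_lt_0_compat; auto; apply lt_0_INR; lia).
  set (J := I Ps Pr Cx r ns nr ths thr).
  set (E := fun v => exists L, 0 <= L /\ v = J L).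
  assert (Hb : bound E).
  { exists 1. intros v [L [HL ->]]. unfold J. eapply I_le1; eauto. }
  assert (Hne : exists v, E v) by (exists (J 0); exists 0; split; [lra|reflexivity]).
  destruct (completeness E Hb Hne) as [p [Hub Hlub]].
  assert (Hex : forall L, 0 <= L -> ex_RInt (gfun Ps Pr Cx r ns ths nr thr) 0 L)
    by (intros; eapply g_ex; eauto; lra).
  assert (Hmono : forall L1 L2, 0 <= L1 -> L1 <= L2 -> J L1 <= J L2)
    by (intros; unfold J; eapply I_mono; eauto).
  assert (HJp : forall L, 0 <= L -> J L <= p) by (intros L HL; apply Hub; exists L; auto).
  exists p. split.
  - exists (hfun Ps Pr Cx r ns ths). split.
    + intros y Hy. unfold hfun. apply inner_infty; auto.
    + split.
      * intros L HL. exists (J L). apply toDefs. apply (RInt_correct _ _ _ (Hex L HL)).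
      * intros eps He.
        assert (H0 : exists L0, 0 <= L0 /\ p - eps < J L0).
        { apply NNPP. intros Hn.
          assert (p <= p - eps). apply Hlub. intros v [L [HL ->]].
          apply Rnot_lt_le. intros Hl. apply Hn. exists L; auto. lra. }
        destruct H0 as [L0 [HL0 HpL0]]. exists L0. intros L v HL Hv.
        assert (Hv' := Defs_uniq _ _ _ _ _ Hv (RInt_correct _ _ _ (Hex L ltac:(lra)))).
        change (RInt (gfun Ps Pr Cx r ns ths nr thr) 0 L) with (J L) in Hv'.
        assert (J L0 <= J L) by (apply Hmono; auto).
        assert (J L <= p) by (apply HJp; lra).
        rewrite Hv'. unfold Rabs. destruct (Rcase_abs (J L - p)); lra.
  - apply Rle_plus_epsilon. intros eps He.
    destruct (Tl_small nr eps He) as [u [Hu Htu]].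
    assert (HL : 0 <= u * thr) by nra.
    assert (H1 := I_ge Ps Pr Cx r HPs HPr Hr HC0 HC1 ns nr ths thr Hths Hthr (u * thr) HL).
    fold J in H1. assert (H2 := HJp _ HL).
    unfold Phi in H1. replace (u * thr / thr) with u in H1 by (field; lra).
    lra.
Qed.
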